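(* Let $\mathcal{G}=(\mathcal{V},\mathcal{E},\rho)$ be a rooted weighted directed graph with edge weights $w_{ij}$ and set of trees $\mathcal{D}$. Let $r:\mathcal{D}\to\mathbb{R}^R$ and $s:\mathcal{D}\to\mathbb{R}^S$ be additively decomposable, $r(d)=\sum_{(i\to j)\in d}r_{ij}$ and $s(d)=\sum_{(i\to j)\in d}s_{ij}$ with $r_{ij}\in\mathbb{R}^R$, $s_{ij}\in\mathbb{R}^S$, where the $r_{ij}$ do not depend on the edge weights $w$. Let $t:\mathcal{D}\to\mathbb{R}^{R\times S}$ be $t(d)=r(d)\,s(d)^\top$ and $\bar{t}=\sum_{d\in\mathcal{D}}w(d)\,t(d)$. Then, with $\bar{r}=\sum_{d\in\mathcal{D}}w(d)\,r(d)$ regarded as a function of the edge weights, $$\bar{t}=\sum_{(i\to j)\in\mathcal{E}}\frac{\partial\bar{r}}{\partial w_{ij}}\,w_{ij}\,s_{ij}^\top,$$ and also $$\bar{t}=\sum_{(i\to j)\in\mathcal{E}}\Big(\bar{w}_{ij}\,r_{ij}\,s_{ij}^\top+\sum_{(k\to l)\in\mathcal{E}}\bar{w}_{ij,kl}\,r_{ij}\,s_{kl}^\top\Big).$$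
   Context: A rooted weighted directed graph $\mathcal{G}=(\mathcal{V},\mathcal{E},\rho)$ has node set $\mathcal{V}=\{1,\dots,N\}\cup\{\rho\}$ with designated root $\rho$; $\mathcal{E}$ is a set of edges $(i\to j)$ between distinct nodes, at most one edge per ordered pair, each carrying a weight $w_{ij}\in\mathbb{R}$; the root has no incoming edges. A tree $d$ of $\mathcal{G}$ is a set of $N$ edges containing no cycle, such that every non-root node has exactly one incoming edge and $\rho$ has at least one outgoing edge. $\mathcal{D}$ denotes the set of all trees (assumed nonempty). The weight of a tree is $w(d)=\prod_{(i\to j)\in d}w_{ij}$. For an edge $(i\to j)$, $\bar{w}_{ij}=\sum_{d\in\mathcal{D}:(i\to j)\in d}w(d)$. For distinct edges $(i\to j)\neq(k\to l)$, $\bar{w}_{ij,kl}=\sum_{d\in\mathcal{D}:(i\to j)\in d,(k\to l)\in d}w(d)$, and by convention $\bar{w}_{ij,ij}=0$. *)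

(* Defs.v *)
From HB Require Import structures.
From mathcomp Require Import all_boot all_order all_algebra.
From mathcomp Require Import all_classical all_reals all_analysis.
Set Implicit Arguments. Unset Strict Implicit. Unset Printing Implicit Defensive.
Import Order.TTheory GRing.Theory Num.Theory.
Local Open Scope ring_scope.

Section RootedGraph.
Variables (V : finType) (rho : V) (E : rel V).

Definition dedge (d : {set V * V}) : rel V := fun a b => (a, b) \in d.

Definition is_tree (d : {set V * V}) : bool :=
  [&& d \subset [set e | E e.1 e.2],
      #|d| == #|V|.-1,
      [forall x, [forall y, ((x, y) \in d) ==> ~~ connect (dedge d) y x]],
      [forall j, (j != rho) ==> (#|[set i | (i, j) \in d]| == 1%N)] &
      [exists j, (rho, j) \in d]].

Definition trees : {set {set V * V}} := [set d | is_tree d].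

Variable R : realType.

Definition tweight (w : V -> V -> R) (d : {set V * V}) : R :=
  \prod_(e in d) w e.1 e.2.

Definition dsum m n (f : V -> V -> 'M[R]_(m, n)) (d : {set V * V}) : 'M[R]_(m, n) :=
  \sum_(e in d) f e.1 e.2.

Definition rbar n (w : V -> V -> R) (r : V -> V -> 'cV[R]_n) : 'cV[R]_n :=
  \sum_(d in trees) tweight w d *: dsum r d.

Definition tbar m n (w : V -> V -> R) (r : V -> V -> 'cV[R]_m)
  (s : V -> V -> 'cV[R]_n) : 'M[R]_(m, n) :=
  \sum_(d in trees) tweight w d *: (dsum r d *m (dsum s d)^T).

Definition wbar1 (w : V -> V -> R) (i j : V) : R :=
  \sum_(d in trees | (i, j) \in d) tweight w d.

Definition wbar2 (w : V -> V -> R) (i j k l : V) : R :=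
  if (i, j) == (k, l) then 0
  else \sum_(d in trees | ((i, j) \in d) && ((k, l) \in d)) tweight w d.

Definition wupd (w : V -> V -> R) (i j : V) (x : R) : V -> V -> R :=
  fun a b => if (a == i) && (b == j) then x else w a b.

Definition drbar n (w : V -> V -> R) (r : V -> V -> 'cV[R]_n) (i j : V) : 'cV[R]_n :=
  \col_k derive1 (fun x : R => rbar (wupd w i j x) r k ord0) (w i j).

End RootedGraph.

(* Main.v *)
Require Import Defs.
From HB Require Import structures.
From mathcomp Require Import all_boot all_order all_algebra.
From mathcomp Require Import all_classical all_reals all_analysis.
Import Order.TTheory GRing.Theory Num.Theory.
Local Open Scope ring_scope.
Set Implicit Arguments.

Lemma aff_der (R: realType) (A B y : R) : derive1 (fun x : R => x * A + B) y = A.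
Proof.
rewrite derive1E deriveD //; last first.
rewrite derive_cst addr0.
by rewrite deriveMr // derive_id mulr1.
Qed.

Section Aux.
Variables (R : realType) (V : finType) (rho : V) (E : rel V).

Lemma tree_subE d : d \in trees rho E -> forall e, e \in d -> E e.1 e.2.
Proof.
rewrite inE => /and5P [/fintype.subsetP H _ _ _ _] e /H; by rewrite inE.
Qed.

Lemma sum_in_tree (M : zmodType) (F : V * V -> M) d : d \in trees rho E ->
  \sum_(e | E e.1 e.2) (if e \in d then F e else 0) = \sum_(e in d) F e.
Proof.
move=> dT; rewrite [RHS]big_mkcond [LHS]big_mkcond /=; apply: eq_bigr => e _.
case Hd: (e \in d); last by case: (E _ _).
by rewrite (tree_subE dT Hd).
Qed.

Lemma trmx_sumE m n (I : finType) (P : pred I) (F : I -> 'M[R]_(m, n)) :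
  (\sum_(i | P i) F i)^T = \sum_(i | P i) (F i)^T.
Proof.
apply/matrixP => a b; rewrite !mxE !summxE; apply: eq_bigr => i _; by rewrite mxE.
Qed.

Lemma tbar_expand (w : V -> V -> R) nR nS
    (r : V -> V -> 'cV[R]_nR) (s : V -> V -> 'cV[R]_nS) :
  tbar rho E w r s = \sum_(e : V * V | E e.1 e.2) \sum_(f : V * V | E f.1 f.2)
     (\sum_(d in trees rho E | (e \in d) && (f \in d)) tweight w d)
        *: (r e.1 e.2 *m (s f.1 f.2)^T).
Proof.
rewrite /tbar.
transitivity (\sum_(d in trees rho E) \sum_(e : V * V | E e.1 e.2)
   \sum_(f : V * V | E f.1 f.2)
   (if (e \in d) && (f \in d) then tweight w d *: (r e.1 e.2 *m (s f.1 f.2)^T) else 0)).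
  apply: eq_bigr => d dT.
  rewrite /dsum mulmx_suml scaler_sumr -(sum_in_tree _ _ dT); apply: eq_bigr => e _.
  case: (e \in d) => /=; last by rewrite big1.
  rewrite trmx_sumE mulmx_sumr scaler_sumr -(sum_in_tree _ _ dT); apply: eq_bigr => f _.
  by case: (f \in d).
rewrite exchange_big; apply: eq_bigr => e _.
rewrite exchange_big; apply: eq_bigr => f _.
by rewrite scaler_suml big_mkcondr.
Qed.

Lemma drbar_eq (w : V -> V -> R) n (r : V -> V -> 'cV[R]_n) i j :
  w i j *: drbar rho E w r i j
    = \sum_(d in trees rho E | (i, j) \in d) tweight w d *: dsum r d.
Proof.
apply/matrixP => k z; rewrite (ord1 z) !mxE summxE.
set c := fun d => dsum r d k ord0.
set P := fun d : {set V * V} => \prod_(e in d | e != (i, j)) w e.1 e.2.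
set A := \sum_(d in trees rho E | (i, j) \in d) P d * c d.
set B := \sum_(d in trees rho E | (i, j) \notin d) tweight w d * c d.
have twE : forall d : {set V * V}, (i, j) \in d -> tweight w d = w i j * P d.
  by move=> d Hd; rewrite /tweight (bigD1 (i, j)).
have -> : (fun x => rbar rho E (wupd w i j x) r k ord0) = (fun x => x * A + B).
  apply/funext => x; rewrite /rbar summxE (bigID (fun d : {set V * V} => (i, j) \in d)) /=.
  rewrite /A mulr_sumr; congr (_ + _); apply: eq_bigr => d /andP [_ Hd]; rewrite mxE.
    rewrite /tweight (bigD1 (i, j)) //= /wupd !eqxx /= mulrA; congr (_ * _ * _).
    apply: eq_bigr => e /andP [_ He]; case: e He => a b He /=.
    case: (a =P i) => [ai|//]; case: (b =P j) => [bj|//] /=.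
    by rewrite ai bj eqxx in He.
  rewrite /tweight; congr (_ * _); apply: eq_bigr => e He; case: e He => a b He /=.
  rewrite /wupd; case: (a =P i) => [ai|//]; case: (b =P j) => [bj|//] /=.
  by rewrite -ai -bj He in Hd.
rewrite aff_der /A mulr_sumr; apply: eq_bigr => d /andP [_ Hd].
by rewrite mxE mulrA twE.
Qed.

End Aux.

Theorem proposition7 (R : realType) (V : finType) (rho : V) (E : rel V)
    (w : V -> V -> R) (nR nS : nat)
    (r : V -> V -> 'cV[R]_nR) (s : V -> V -> 'cV[R]_nS)
    (Hnoloop : forall i, ~~ E i i)
    (Hroot : forall i, ~~ E i rho)
    (Hne : (0 < #|trees rho E|)%N) :
  tbar rho E w r s
    = \sum_(e : V * V | E e.1 e.2)
        (w e.1 e.2 *: (drbar rho E w r e.1 e.2 *m (s e.1 e.2)^T))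
  /\
  tbar rho E w r s
    = \sum_(e : V * V | E e.1 e.2)
        (wbar1 rho E w e.1 e.2 *: (r e.1 e.2 *m (s e.1 e.2)^T)
         + \sum_(f : V * V | E f.1 f.2)
             wbar2 rho E w e.1 e.2 f.1 f.2 *: (r e.1 e.2 *m (s f.1 f.2)^T)).
Proof.
split.
  symmetry.
  transitivity (\sum_(e : V * V | E e.1 e.2) \sum_(d in trees rho E)
    (if e \in d then tweight w d *: (dsum r d *m (s e.1 e.2)^T) else 0)).
    apply: eq_bigr => -[i j] _ /=.
    rewrite scalemxAl drbar_eq mulmx_suml big_mkcondr /=; apply: eq_bigr => d _.
    by case: ifP => // _; rewrite scalemxAl.
  rewrite exchange_big /tbar; apply: eq_bigr => d dT.
  rewrite (sum_in_tree _ _ dT) /dsum trmx_sumE mulmx_sumr scaler_sumr.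
  by apply: eq_bigr => e _; rewrite scalemxAl.
rewrite tbar_expand; apply: eq_bigr => -[i j] Eij /=.
rewrite [LHS](bigD1 (i, j)) // [X in _ = _ + X](bigD1 (i, j)) //=.
rewrite /wbar2 eqxx scale0r add0r; congr (_ + _).
  by congr (_ *: _); apply: eq_bigl => d; rewrite andbb.
apply: eq_bigr => -[k l] /andP [_ Hne2] /=.
by rewrite [(i, j) == _]eq_sym (negbTE Hne2).
Qed.
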